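(* Let $A\in\mathbb{C}^{m\times n}$ have rank $r$, $B\in\mathbb{C}^{m\times n}$ have rank $s$, and $E=B-A$. Then $$\|B^{\dagger}-A^{\dagger}\|_{F}^{2}\leq\min\big\{\delta_{1}+\|B^{\dagger}EA^{\dagger}\|_{F}^{2},\ \delta_{2}+\|A^{\dagger}EB^{\dagger}\|_{F}^{2}\big\},$$ where $$\delta_{1}:=\max\big\{\|A^{\dagger}\|_{2}^{4},\|B^{\dagger}\|_{2}^{4}\big\}\Big(\|E\|_{F}^{2}-\max\Big\{\frac{\|AA^{\dagger}EB^{\dagger}\|_{F}^{2}}{\|B^{\dagger}\|_{2}^{2}},\frac{\|A^{\dagger}EB^{\dagger}B\|_{F}^{2}}{\|A^{\dagger}\|_{2}^{2}}\Big\}\Big),$$ $$\delta_{2}:=\max\big\{\|A^{\dagger}\|_{2}^{4},\|B^{\dagger}\|_{2}^{4}\big\}\Big(\|E\|_{F}^{2}-\max\Big\{\frac{\|BB^{\dagger}EA^{\dagger}\|_{F}^{2}}{\|A^{\dagger}\|_{2}^{2}},\frac{\|B^{\dagger}EA^{\dagger}A\|_{F}^{2}}{\|B^{\dagger}\|_{2}^{2}}\Big\}\Big).$$ In particular, if $s=r$, then $$\|B^{\dagger}-A^{\dagger}\|_{F}^{2}\leq\min\big\{\varepsilon_{1}+\|B^{\dagger}EA^{\dagger}\|_{F}^{2},\ \varepsilon_{2}+\|A^{\dagger}EB^{\dagger}\|_{F}^{2}\big\},$$ where $$\varepsilon_{1}:=\|A^{\dagger}\|_{2}^{2}\|B^{\dagger}\|_{2}^{2}\Big(\|E\|_{F}^{2}-\max\Big\{\frac{\|BB^{\dagger}EA^{\dagger}\|_{F}^{2}}{\|A^{\dagger}\|_{2}^{2}},\frac{\|B^{\dagger}EA^{\dagger}A\|_{F}^{2}}{\|B^{\dagger}\|_{2}^{2}}\Big\}\Big),$$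 $$\varepsilon_{2}:=\|A^{\dagger}\|_{2}^{2}\|B^{\dagger}\|_{2}^{2}\Big(\|E\|_{F}^{2}-\max\Big\{\frac{\|AA^{\dagger}EB^{\dagger}\|_{F}^{2}}{\|B^{\dagger}\|_{2}^{2}},\frac{\|A^{\dagger}EB^{\dagger}B\|_{F}^{2}}{\|A^{\dagger}\|_{2}^{2}}\Big\}\Big).$$
   Context: $M^{\dagger}$ denotes the Moore–Penrose inverse of $M$, $\|\cdot\|_{2}$ the spectral norm and $\|\cdot\|_{F}$ the Frobenius norm. *)

(* Defs.v *)
From HB Require Import structures.
From mathcomp Require Import all_boot all_order all_algebra.
From mathcomp Require Import complex.
From mathcomp Require Import classical_sets reals.
Set Implicit Arguments. Unset Strict Implicit. Unset Printing Implicit Defensive.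
Import Order.TTheory GRing.Theory Num.Theory.
Local Open Scope ring_scope.
Local Open Scope classical_set_scope.

Section Defs.
Variable R : realType.

Definition cabs2 (z : R[i]) : R := let: Complex a b := z in a ^+ 2 + b ^+ 2.

Definition ctrmx (m n : nat) (M : 'M[R[i]]_(m, n)) : 'M[R[i]]_(n, m) :=
  map_mx (@conjc R) M^T.

Definition frob2 (m n : nat) (M : 'M[R[i]]_(m, n)) : R :=
  \sum_(i < m) \sum_(j < n) cabs2 (M i j).

Definition frob (m n : nat) (M : 'M[R[i]]_(m, n)) : R := Num.sqrt (frob2 M).

Definition specnorm (m n : nat) (M : 'M[R[i]]_(m, n)) : R :=
  sup [set frob (M *m x) | x in [set x : 'cV[R[i]]_n | frob x <= 1]].

Definition is_MP (m n : nat) (A : 'M[R[i]]_(m, n)) (X : 'M[R[i]]_(n, m)) : Prop :=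
  [/\ A *m X *m A = A, X *m A *m X = X,
      ctrmx (A *m X) = A *m X & ctrmx (X *m A) = X *m A].

End Defs.

(* Main.v *)
Require Import Defs.
From HB Require Import structures.
From mathcomp Require Import all_boot all_order all_algebra.
From mathcomp Require Import complex.
From mathcomp Require Import classical_sets reals.
From mathcomp Require Import ring lra.
Set Implicit Arguments. Unset Strict Implicit. Unset Printing Implicit Defensive.
Import Order.TTheory GRing.Theory Num.Theory.
Local Open Scope ring_scope.

Section Basics.
Variable R : realType.
Local Notation C := R[i].

Definition rdot (z w : C) : R := complex.Re z * complex.Re w + complex.Im z * complex.Im w.

Lemma rdotC z w : rdot z w = rdot w z.
Proof. by rewrite /rdot mulrC [complex.Im z * _]mulrC. Qed.

Lemma rdotDl x y z : rdot (x + y) z = rdot x z + rdot y z.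
Proof. case: x => a b; case: y => c d; case: z => e f; rewrite /rdot /=; ring. Qed.

Lemma rdotNl x z : rdot (- x) z = - rdot x z.
Proof. case: x => a b; case: z => e f; rewrite /rdot /=; ring. Qed.

Lemma rdotMl a b c : rdot (a * b) c = rdot b (conjc a * c).
Proof. case: a => a1 a2; case: b => b1 b2; case: c => c1 c2; rewrite /rdot /=; ring. Qed.

Lemma rdotJ a b : rdot (conjc a) (conjc b) = rdot a b.
Proof. case: a => a1 a2; case: b => b1 b2; rewrite /rdot /=; ring. Qed.

Lemma rdotZl (t : R) a b : rdot ((t%:C)%C * a) b = t * rdot a b.
Proof. case: a => a1 a2; case: b => b1 b2; rewrite /rdot /=; ring. Qed.

Lemma rdot0l z : rdot 0 z = 0.
Proof. by case: z => a b; rewrite /rdot /= !mul0r addr0. Qed.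

Lemma rdotR1 (t : R) : rdot 1 ((t%:C)%C) = t.
Proof. by rewrite /rdot /= mul1r mul0r addr0. Qed.

Lemma rdotxx z : rdot z z = cabs2 z.
Proof. by case: z => a b; rewrite /rdot /= !expr2. Qed.

Lemma cabs2_ge0 (z : C) : 0 <= cabs2 z.
Proof. by case: z => a b /=; rewrite addr_ge0 ?sqr_ge0. Qed.

Lemma cabs2_eq0 (z : C) : cabs2 z = 0 -> z = 0.
Proof.
case: z => a b /= /eqP; rewrite paddr_eq0 ?sqr_ge0 // !sqrf_eq0 => /andP[/eqP-> /eqP->].
by [].
Qed.

Lemma cabs2M (a b : C) : cabs2 (a * b) = cabs2 a * cabs2 b.
Proof. case: a => a1 a2; case: b => b1 b2; rewrite /=; ring. Qed.

Lemma cabs2J (a : C) : cabs2 (conjc a) = cabs2 a.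
Proof. case: a => a1 a2; rewrite /=; ring. Qed.

Lemma rdot_sum_l I (r : seq I) (P : pred I) (F : I -> C) z :
  rdot (\sum_(i <- r | P i) F i) z = \sum_(i <- r | P i) rdot (F i) z.
Proof.
elim/big_rec2: _ => [|i y1 y2 _ <-]; last by rewrite rdotDl.
by rewrite /rdot /= !mul0r addr0.
Qed.


Definition ip (m n : nat) (X Y : 'M[C]_(m, n)) : R :=
  \sum_(i < m) \sum_(j < n) rdot (X i j) (Y i j).

Lemma frob2E m n (X : 'M[C]_(m, n)) : frob2 X = ip X X.
Proof. by rewrite /frob2 /ip; apply: eq_bigr => i _; apply: eq_bigr => j _; rewrite rdotxx. Qed.

Lemma ipC m n (X Y : 'M[C]_(m, n)) : ip X Y = ip Y X.
Proof. by apply: eq_bigr => i _; apply: eq_bigr => j _; rewrite rdotC. Qed.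

Lemma ipDl m n (X Y Z : 'M[C]_(m, n)) : ip (X + Y) Z = ip X Z + ip Y Z.
Proof.
rewrite /ip -big_split; apply: eq_bigr => i _; rewrite -big_split.
by apply: eq_bigr => j _; rewrite mxE rdotDl.
Qed.

Lemma ipNl m n (X Z : 'M[C]_(m, n)) : ip (- X) Z = - ip X Z.
Proof.
rewrite /ip -sumrN; apply: eq_bigr => i _; rewrite -sumrN.
by apply: eq_bigr => j _; rewrite mxE rdotNl.
Qed.

Lemma ipDr m n (X Y Z : 'M[C]_(m, n)) : ip Z (X + Y) = ip Z X + ip Z Y.
Proof. by rewrite ipC ipDl ipC [ip Y Z]ipC. Qed.

Lemma ipNr m n (X Z : 'M[C]_(m, n)) : ip Z (- X) = - ip Z X.
Proof. by rewrite ipC ipNl ipC. Qed.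

Lemma ipBl m n (X Y Z : 'M[C]_(m, n)) : ip (X - Y) Z = ip X Z - ip Y Z.
Proof. by rewrite ipDl ipNl. Qed.

Lemma ipBr m n (X Y Z : 'M[C]_(m, n)) : ip Z (X - Y) = ip Z X - ip Z Y.
Proof. by rewrite ipDr ipNr. Qed.

Lemma ip0l m n (Z : 'M[C]_(m, n)) : ip 0 Z = 0.
Proof. by have := ipNl 0 Z; rewrite oppr0 => /eqP; rewrite -subr_eq0 opprK -mulr2n mulrn_eq0 /= => /eqP. Qed.

Lemma ip0r m n (Z : 'M[C]_(m, n)) : ip Z 0 = 0.
Proof. by rewrite ipC ip0l. Qed.

Lemma ctrmxE m n (M : 'M[C]_(m, n)) i j : ctrmx M i j = conjc (M j i).
Proof. by rewrite /ctrmx !mxE. Qed.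

Lemma ctrmxK m n (M : 'M[C]_(m, n)) : ctrmx (ctrmx M) = M.
Proof. by apply/matrixP => i j; rewrite !ctrmxE conjcK. Qed.

Lemma ctrmxM m n p (X : 'M[C]_(m, n)) (Y : 'M[C]_(n, p)) :
  ctrmx (X *m Y) = ctrmx Y *m ctrmx X.
Proof. by rewrite /ctrmx trmx_mul map_mxM. Qed.

Lemma ctrmxD m n (X Y : 'M[C]_(m, n)) : ctrmx (X + Y) = ctrmx X + ctrmx Y.
Proof. by rewrite /ctrmx linearD map_mxD. Qed.

Lemma ctrmxN m n (X : 'M[C]_(m, n)) : ctrmx (- X) = - ctrmx X.
Proof. by rewrite /ctrmx linearN map_mxN. Qed.

Lemma ctrmxB m n (X Y : 'M[C]_(m, n)) : ctrmx (X - Y) = ctrmx X - ctrmx Y.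
Proof. by rewrite ctrmxD ctrmxN. Qed.

Lemma ctrmx1 n : ctrmx (1%:M : 'M[C]_n) = 1%:M.
Proof. by rewrite /ctrmx trmx1 map_mx1. Qed.

Lemma ip_ctr m n (X Y : 'M[C]_(m, n)) : ip (ctrmx X) (ctrmx Y) = ip X Y.
Proof.
rewrite /ip exchange_big; apply: eq_bigr => i _; apply: eq_bigr => j _.
by rewrite !ctrmxE rdotJ.
Qed.

Lemma ip_mull m n p (M : 'M[C]_(m, n)) (X : 'M[C]_(n, p)) (Y : 'M[C]_(m, p)) :
  ip (M *m X) Y = ip X (ctrmx M *m Y).
Proof.
rewrite /ip.
transitivity (\sum_(i < m) \sum_(j < p) \sum_(k < n) rdot (X k j) (conjc (M i k) * Y i j)).
  apply: eq_bigr => i _; apply: eq_bigr => j _; rewrite mxE rdot_sum_l.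
  by apply: eq_bigr => k _; rewrite rdotMl.
transitivity (\sum_(k < n) \sum_(j < p) \sum_(i < m) rdot (X k j) (conjc (M i k) * Y i j)).
  rewrite exchange_big /= [RHS]exchange_big /=; apply: eq_bigr => j _.
  by rewrite exchange_big.
apply: eq_bigr => k _; apply: eq_bigr => j _; rewrite mxE rdotC rdot_sum_l.
by apply: eq_bigr => i _; rewrite ctrmxE rdotC.
Qed.

Lemma ip_mulr m n p (M : 'M[C]_(n, p)) (X : 'M[C]_(m, n)) (Y : 'M[C]_(m, p)) :
  ip (X *m M) Y = ip X (Y *m ctrmx M).
Proof.
by rewrite -ip_ctr ctrmxM ip_mull ctrmxK -ip_ctr ctrmxK ctrmxM ctrmxK.
Qed.


Lemma frob2_ge0 m n (X : 'M[C]_(m, n)) : 0 <= frob2 X.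
Proof. by apply: sumr_ge0 => i _; apply: sumr_ge0 => j _; apply: cabs2_ge0. Qed.

Lemma frob_sq m n (X : 'M[C]_(m, n)) : frob X ^+ 2 = frob2 X.
Proof. by rewrite /frob sqr_sqrtr // frob2_ge0. Qed.

Lemma frob_ge0 m n (X : 'M[C]_(m, n)) : 0 <= frob X.
Proof. by rewrite /frob sqrtr_ge0. Qed.

Lemma frob2_eq0 m n (X : 'M[C]_(m, n)) : frob2 X = 0 -> X = 0.
Proof.
move=> /eqP; rewrite psumr_eq0; last by move=> i _; apply: sumr_ge0 => j _; apply: cabs2_ge0.
move=> /allP H; apply/matrixP => i j; rewrite mxE.
have /implyP/(_ isT) := H i (mem_index_enum _).
rewrite psumr_eq0; last by move=> k _; apply: cabs2_ge0.
by move=> /allP/(_ j (mem_index_enum _)) /implyP/(_ isT) /eqP /cabs2_eq0.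
Qed.

Lemma frob2D m n (X Y : 'M[C]_(m, n)) : frob2 (X + Y) = frob2 X + frob2 Y + 2 * ip X Y.
Proof. rewrite !frob2E ipDl !ipDr [ip Y X]ipC; ring. Qed.

Lemma frob2B m n (X Y : 'M[C]_(m, n)) : frob2 (X - Y) = frob2 X + frob2 Y - 2 * ip X Y.
Proof. rewrite !frob2E ipDl !ipDr !ipNl !ipNr [ip Y X]ipC; ring. Qed.

Lemma frob2N m n (X : 'M[C]_(m, n)) : frob2 (- X) = frob2 X.
Proof. by rewrite !frob2E ipNl ipNr opprK. Qed.

Lemma frob2_ctr m n (X : 'M[C]_(m, n)) : frob2 (ctrmx X) = frob2 X.
Proof. by rewrite !frob2E ip_ctr. Qed.

Lemma frob2Z m n (c : C) (X : 'M[C]_(m, n)) : frob2 (c *: X) = cabs2 c * frob2 X.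
Proof.
rewrite /frob2 mulr_sumr; apply: eq_bigr => i _; rewrite mulr_sumr.
by apply: eq_bigr => j _; rewrite mxE cabs2M.
Qed.

Lemma ipZl m n (t : R) (X Y : 'M[C]_(m, n)) : ip ((t%:C)%C *: X) Y = t * ip X Y.
Proof.
rewrite /ip mulr_sumr; apply: eq_bigr => i _; rewrite mulr_sumr.
by apply: eq_bigr => j _; rewrite mxE rdotZl.
Qed.

Lemma cabs2R (t : R) : cabs2 ((t%:C)%C) = t ^+ 2.
Proof. by rewrite /= expr0n /= addr0. Qed.

Lemma CS m n (X Y : 'M[C]_(m, n)) : ip X Y <= frob X * frob Y.
Proof.
have [X0|] := eqVneq (frob X) 0.
  have : frob2 X = 0 by rewrite -frob_sq X0 expr0n.
  by move/frob2_eq0 => ->; rewrite ip0l mulr_ge0 ?frob_ge0.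
have [Y0|] := eqVneq (frob Y) 0.
  have : frob2 Y = 0 by rewrite -frob_sq Y0 expr0n.
  by move/frob2_eq0 => ->; rewrite ip0r mulr_ge0 ?frob_ge0.
move=> nY nX.
have a0 : 0 < frob X by rewrite lt_def nX frob_ge0.
have b0 : 0 < frob Y by rewrite lt_def nY frob_ge0.
have := frob2_ge0 (((frob Y)%:C)%C *: X - ((frob X)%:C)%C *: Y).
rewrite frob2B !frob2Z !cabs2R ipZl ipC ipZl -!frob_sq => H.
have : 0 <= 2 * (frob X * frob Y) * (frob X * frob Y - ip Y X) by nra.
rewrite ipC pmulr_rge0 ?subr_ge0 //; by rewrite mulr_gt0 // mulr_gt0.
Qed.

Lemma frob_triangle m n (X Y : 'M[C]_(m, n)) : frob (X + Y) <= frob X + frob Y.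
Proof.
rewrite -(ler_pXn2r (isT : (0 < 2)%N)) ?nnegrE ?addr_ge0 ?frob_ge0 //.
rewrite frob_sq frob2D -!frob_sq; have := CS X Y; nra.
Qed.

Lemma frobZ m n (c : C) (X : 'M[C]_(m, n)) : frob (c *: X) = Num.sqrt (cabs2 c) * frob X.
Proof. by rewrite /frob frob2Z sqrtrM // cabs2_ge0. Qed.


Local Open Scope classical_set_scope.

Lemma mulmx_sum_colv m n (M : 'M[C]_(m, n)) (x : 'cV[C]_n) :
  M *m x = \sum_j x j 0 *: col j M.
Proof.
apply/matrixP => i k; rewrite !mxE summxE; apply: eq_bigr => j _.
by rewrite !mxE (ord1 k) mulrC.
Qed.

Lemma frob0 m n : frob (0 : 'M[C]_(m, n)) = 0.
Proof.
rewrite /frob /frob2 big1 ?sqrtr0 // => i _; rewrite big1 // => j _.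
by rewrite mxE /= expr0n /= addr0.
Qed.

Lemma frob_sum m n I (r : seq I) (F : I -> 'M[C]_(m, n)) :
  frob (\sum_(i <- r) F i) <= \sum_(i <- r) frob (F i).
Proof.
apply: (big_ind2 (fun a b => frob a <= b)).
- by rewrite frob0.
- by move=> a1 b1 a2 b2 h1 h2; apply: le_trans (frob_triangle _ _) _; apply: lerD.
- by [].
Qed.

Lemma cabs2_le_frob2 m n (X : 'M[C]_(m, n)) i j : cabs2 (X i j) <= frob2 X.
Proof.
rewrite /frob2 (bigD1 i) //= (bigD1 j) //= -addrA lerDl addr_ge0 //.
  by apply: sumr_ge0 => k _; apply: cabs2_ge0.
by apply: sumr_ge0 => k _; apply: sumr_ge0 => l _; apply: cabs2_ge0.
Qed.

Lemma frob_le1 m n (X : 'M[C]_(m, n)) : frob X <= 1 -> frob2 X <= 1.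
Proof.
move=> h; rewrite -frob_sq -(expr1n _ 2).
by rewrite ler_pXn2r ?nnegrE ?frob_ge0.
Qed.

Lemma specset_bound m n (M : 'M[C]_(m, n)) (x : 'cV[C]_n) :
  frob x <= 1 -> frob (M *m x) <= \sum_j frob (col j M).
Proof.
move=> hx; rewrite mulmx_sum_colv; apply: le_trans (frob_sum _ _) _.
apply: ler_sum => j _; rewrite frobZ -[X in _ <= X]mul1r ler_wpM2r ?frob_ge0 //.
rewrite -sqrtr1 ler_sqrt //; exact: le_trans (cabs2_le_frob2 _ _ _) (frob_le1 hx).
Qed.

Lemma specset_has_sup m n (M : 'M[C]_(m, n)) :
  has_sup [set frob (M *m x) | x in [set x : 'cV[C]_n | frob x <= 1]].
Proof.
split.
  exists (frob (M *m (0 : 'cV[C]_n))); exists 0 => //=; first by rewrite frob0 ler01.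
exists (\sum_j frob (col j M)) => y [x /= hx <-].
exact: specset_bound.
Qed.

Lemma spec_ub1 m n (M : 'M[C]_(m, n)) (x : 'cV[C]_n) :
  frob x <= 1 -> frob (M *m x) <= specnorm M.
Proof.
move=> hx; apply: (sup_upper_bound (specset_has_sup M)).
by exists x.
Qed.

Lemma spec_ge0 m n (M : 'M[C]_(m, n)) : 0 <= specnorm M.
Proof.
have := @spec_ub1 m n M 0; rewrite mulmx0 !frob0; apply; exact: ler01.
Qed.

Lemma spec_ub m n (M : 'M[C]_(m, n)) (x : 'cV[C]_n) :
  frob (M *m x) <= specnorm M * frob x.
Proof.
have [x0|nx] := eqVneq (frob x) 0.
  have : frob2 x = 0 by rewrite -frob_sq x0 expr0n.
  by move/frob2_eq0 => ->; rewrite mulmx0 !frob0 mulr0.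
have a0 : 0 < frob x by rewrite lt_def nx frob_ge0.
have := spec_ub1 M (x := ((frob x)^-1%:C)%C *: x).
rewrite -scalemxAr !frobZ cabs2R sqrtr_sqr ger0_norm ?invr_ge0 ?frob_ge0 //.
rewrite mulVf // lexx => /(_ isT).
by rewrite mulrC ler_pdivrMr.
Qed.


Lemma frob2_cols m n (X : 'M[C]_(m, n)) : frob2 X = \sum_j frob2 (col j X).
Proof.
rewrite /frob2 exchange_big; apply: eq_bigr => j _; apply: eq_bigr => i _.
by rewrite big_ord1 mxE.
Qed.

Lemma col_lift m n p (N : 'M[C]_(m, n)) (k : R) (X : 'M[C]_(n, p)) :
  (forall v : 'cV[C]_n, frob2 (N *m v) <= k * frob2 v) -> frob2 (N *m X) <= k * frob2 X.
Proof.
move=> h; rewrite !frob2_cols mulr_sumr; apply: ler_sum => j _.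
by rewrite colE -mulmxA -colE.
Qed.

Lemma specL m n p (M : 'M[C]_(m, n)) (X : 'M[C]_(n, p)) :
  frob2 (M *m X) <= specnorm M ^+ 2 * frob2 X.
Proof.
apply: col_lift => v; rewrite -!frob_sq -exprMn.
by rewrite ler_pXn2r ?nnegrE ?mulr_ge0 ?frob_ge0 ?spec_ge0 // spec_ub.
Qed.

Lemma specLc m n p (M : 'M[C]_(m, n)) (X : 'M[C]_(m, p)) :
  frob2 (ctrmx M *m X) <= specnorm M ^+ 2 * frob2 X.
Proof.
apply: col_lift => v; rewrite -!frob_sq -exprMn.
rewrite ler_pXn2r ?nnegrE ?mulr_ge0 ?frob_ge0 ?spec_ge0 //.
set a := frob (ctrmx M *m v).
have h1 : a ^+ 2 <= frob v * (specnorm M * a).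
  rewrite /a frob_sq frob2E ip_mull ctrmxK.
  apply: le_trans (CS _ _) _; rewrite ler_wpM2l ?frob_ge0 //; exact: spec_ub.
have a0 : 0 <= a by exact: frob_ge0.
have b0 : 0 <= specnorm M * frob v by rewrite mulr_ge0 ?spec_ge0 ?frob_ge0.
have h2 : a * a <= (specnorm M * frob v) * a.
  by rewrite -expr2 (le_trans h1) // mulrCA mulrA.
have [->|ap] := eqVneq a 0; first by [].
have ap' : 0 < a by rewrite lt_def ap a0.
by rewrite -(ler_pM2r ap').
Qed.

Lemma specR m n p (M : 'M[C]_(n, p)) (X : 'M[C]_(m, n)) :
  frob2 (X *m M) <= frob2 X * specnorm M ^+ 2.
Proof.
by rewrite -frob2_ctr ctrmxM mulrC -(frob2_ctr X); apply: specLc.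
Qed.


Lemma trace_idem_aux k r (Cb : 'M[C]_(k, r)) (Rb : 'M[C]_(r, k)) L K :
  L *m Cb = 1%:M -> Rb *m K = 1%:M -> (Cb *m Rb) *m (Cb *m Rb) = Cb *m Rb ->
  \tr (Cb *m Rb) = r%:R.
Proof.
move=> LC RK PP.
have e : Rb *m Cb = 1%:M.
  have := congr1 (fun X => L *m X *m K) PP.
  by rewrite /= !mulmxA LC mul1mx -!mulmxA RK mulmx1.
by rewrite mxtrace_mulC e mxtrace1.
Qed.

Lemma ctrmx_proj_frob2 k (P : 'M[C]_k) :
  P *m P = P -> ctrmx P = P -> frob2 P = (\rank P)%:R.
Proof.
move=> PP Ph.
have -> : frob2 P = ip 1%:M P.
  by rewrite frob2E -{1}[P]mulmx1 ip_mull Ph PP.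
have -> : ip 1%:M P = rdot 1 (\tr P).
  rewrite /ip rdotC /mxtrace rdot_sum_l; apply: eq_bigr => i _.
  rewrite (bigD1 i) //= big1 ?addr0; last first.
    by move=> j ji; rewrite mxE eq_sym (negbTE ji) mulr0n rdot0l.
  by rewrite mxE eqxx mulr1n rdotC.
have -> : \tr P = (\rank P)%:R.
  have [L LC] := row_fullP (col_base_full P).
  have [K RK] := row_freeP (row_base_free P).
  have hb := mulmx_base P.
  by rewrite -hb (trace_idem_aux LC RK) // hb.
by rewrite -(rmorph_nat (@real_complex R)) rdotR1.
Qed.


Lemma proj_sine k (P1 P2 : 'M[C]_k) :
  P1 *m P1 = P1 -> ctrmx P1 = P1 -> P2 *m P2 = P2 -> ctrmx P2 = P2 ->
  frob2 (P1 *m (1%:M - P2)) = frob2 P1 - ip P1 P2.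
Proof.
move=> P11 P1h P22 P2h.
rewrite mulmxBr mulmx1 frob2B.
have e1 : ip P1 (P1 *m P2) = ip P1 P2.
  by rewrite ipC ip_mull P1h P11 ipC.
have e2 : frob2 (P1 *m P2) = ip P1 P2.
  by rewrite frob2E ip_mulr P2h -mulmxA P22 ipC ip_mull P1h P11 ipC.
rewrite e1 e2; ring.
Qed.

Lemma proj_sine_eq k (P1 P2 : 'M[C]_k) :
  P1 *m P1 = P1 -> ctrmx P1 = P1 -> P2 *m P2 = P2 -> ctrmx P2 = P2 ->
  \rank P1 = \rank P2 ->
  frob2 (P1 *m (1%:M - P2)) = frob2 (P2 *m (1%:M - P1)).
Proof.
move=> P11 P1h P22 P2h rk.
rewrite !proj_sine // !ctrmx_proj_frob2 // rk ipC //.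
Qed.

Lemma rank_mulMP m n (A : 'M[C]_(m, n)) (X : 'M[C]_(n, m)) :
  A *m X *m A = A -> \rank (A *m X) = \rank A /\ \rank (X *m A) = \rank A.
Proof.
move=> h; split; apply/eqP; rewrite eqn_leq ?mxrankM_maxl ?mxrankM_maxr /=.
  by rewrite -{1}h mxrankM_maxl.
by rewrite -{1}h -mulmxA mxrankM_maxr.
Qed.


Lemma ctrmx0 m n : ctrmx (0 : 'M[C]_(m, n)) = 0.
Proof. by apply/matrixP => i j; rewrite ctrmxE !mxE conjc0. Qed.

Lemma specRc m n p (M : 'M[C]_(p, n)) (X : 'M[C]_(m, n)) :
  frob2 (X *m ctrmx M) <= frob2 X * specnorm M ^+ 2.
Proof.
rewrite -frob2_ctr ctrmxM ctrmxK mulrC -(frob2_ctr X); exact: specL.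
Qed.

Lemma div_sq_le (a s z : R) : 0 <= z -> a <= z * s ^+ 2 -> a / s ^+ 2 <= z.
Proof.
move=> z0 h; have [->|s0] := eqVneq s 0.
  by rewrite expr0n /= invr0 mulr0.
have s2 : 0 < s ^+ 2 by rewrite lt_def sqrf_eq0 s0 sqr_ge0.
by rewrite ler_pdivrMr.
Qed.

End Basics.

Section Main.
Variable R : realType.
Local Notation C := R[i].

Lemma frobN m n (X : 'M[C]_(m, n)) : frob (- X) = frob X.
Proof. by rewrite /frob frob2N. Qed.

Lemma zid1 p q (a b c d : 'M[C]_(p, q)) : a - b = a - c - (b - d) - (d - c).
Proof. apply/matrixP => i j; rewrite !mxE; ring. Qed.

Lemma zid2 p q (a b c : 'M[C]_(p, q)) : a = a - b + (b - c + c).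
Proof. apply/matrixP => i j; rewrite !mxE; ring. Qed.

Lemma fin1 (x2 x3 t f1 f2 z mx a4 b4 : R) :
  0 <= f1 -> 0 <= f2 -> 0 <= a4 -> x2 <= b4 * f1 -> x3 <= a4 * f2 -> mx <= z ->
  x2 + x3 + t <= Num.max a4 b4 * (f1 + f2 + z - mx) + t.
Proof.
move=> h1 h2 h3 h4 h5 h6.
have m1 : a4 <= Num.max a4 b4 by rewrite le_max lexx.
have m2 : b4 <= Num.max a4 b4 by rewrite le_max lexx orbT.
have g1 : b4 * f1 <= Num.max a4 b4 * f1 by rewrite ler_wpM2r.
have g2 : a4 * f2 <= Num.max a4 b4 * f2 by rewrite ler_wpM2r.
have g3 : 0 <= Num.max a4 b4 * (z - mx) by rewrite mulr_ge0 ?subr_ge0 // (le_trans h3).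
move: g1 g2 g3; set M := Num.max a4 b4 => g1 g2 g3.
have -> : M * (f1 + f2 + z - mx) = M * f1 + M * f2 + M * (z - mx) by ring.
lra.
Qed.

Lemma fin2 (x2 x3 t f1 f2 z mx a b : R) :
  0 <= a -> 0 <= b -> x2 <= b * (a * f1) -> x3 <= a * (b * f2) -> mx <= z ->
  x2 + x3 + t <= a * b * (f1 + f2 + z - mx) + t.
Proof.
move=> a0 b0 h4 h5 h6.
have g3 : 0 <= a * b * (z - mx) by rewrite !mulr_ge0 ?subr_ge0.
have -> : a * b * (f1 + f2 + z - mx) = b * (a * f1) + a * (b * f2) + a * b * (z - mx) by ring.
lra.
Qed.

Lemma frob2_3 p q (X Y Z : 'M[C]_(p, q)) :
  ip X (Y + Z) = 0 -> ip Y Z = 0 -> frob2 (X + (Y + Z)) = frob2 X + frob2 Y + frob2 Z.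
Proof. by move=> o1 o2; rewrite frob2D o1 frob2D o2; ring. Qed.

Lemma part1 m n (A B : 'M[C]_(m, n)) (Ad Bd : 'M[C]_(n, m)) :
  is_MP A Ad -> is_MP B Bd ->
  frob (Bd - Ad) ^+ 2 <= Num.max (specnorm Ad ^+ 4) (specnorm Bd ^+ 4) *
      (frob (B - A) ^+ 2 - Num.max (frob (A *m Ad *m (B - A) *m Bd) ^+ 2 / specnorm Bd ^+ 2)
                             (frob (Ad *m (B - A) *m Bd *m B) ^+ 2 / specnorm Ad ^+ 2))
   + frob (Bd *m (B - A) *m Ad) ^+ 2.
Proof.
case=> hA1 hA2 hA3 hA4; case=> hB1 hB2 hB3 hB4.
rewrite !frob_sq.
set E := B - A; set nA := specnorm Ad; set nB := specnorm Bd.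
set P := A *m Ad; set Q := Bd *m B.
have hE : E = B - A by [].
clearbody E.
have PP : P *m P = P by rewrite /P mulmxA hA1.
have QQ : Q *m Q = Q by rewrite /Q mulmxA hB2.
have PcP : (1%:M - P) *m P = 0 by rewrite mulmxBl mul1mx PP subrr.
have PPc : P *m (1%:M - P) = 0 by rewrite mulmxBr mulmx1 PP subrr.
have QcQ : (1%:M - Q) *m Q = 0 by rewrite mulmxBl mul1mx QQ subrr.
have QQc : Q *m (1%:M - Q) = 0 by rewrite mulmxBr mulmx1 QQ subrr.
have hAP : (1%:M - P) *m A = 0 by rewrite mulmxBl mul1mx /P hA1 subrr.
have hBQ : B *m (1%:M - Q) = 0 by rewrite mulmxBr mulmx1 /Q mulmxA hB1 subrr.
have AdP : Ad *m P = Ad by rewrite /P mulmxA hA2.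
have QBd : Q *m Bd = Bd by rewrite /Q hB2.
have Pc : ctrmx (1%:M - P) = 1%:M - P by rewrite ctrmxB ctrmx1 hA3.
have Qc : ctrmx (1%:M - Q) = 1%:M - Q by rewrite ctrmxB ctrmx1 hB4.
have D : Bd - Ad = Bd *m (1%:M - P) - (1%:M - Q) *m Ad - Bd *m E *m Ad.
  rewrite hE /P /Q mulmxBr mulmx1 mulmxBl mul1mx mulmxBr mulmxBl !mulmxA.
  exact: zid1.
have O1 : ip (Bd *m (1%:M - P)) ((1%:M - Q) *m Ad) = 0.
  by rewrite -{1}QBd -mulmxA ip_mull hB4 -/Q mulmxA QQc mul0mx ip0r.
have O2 : ip (Bd *m (1%:M - P)) (Bd *m E *m Ad) = 0.
  by rewrite -AdP mulmxA ipC ip_mulr hA3 -/P -[Bd *m (1%:M - P) *m P]mulmxA PcP mulmx0 ip0r.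
have O3 : ip ((1%:M - Q) *m Ad) (Bd *m E *m Ad) = 0.
  have -> : Bd *m E *m Ad = Q *m (Bd *m E *m Ad) by rewrite !mulmxA QBd.
  by rewrite ipC ip_mull hB4 -/Q mulmxA QQc mul0mx ip0r.
have F : frob2 (Bd - Ad) = frob2 (Bd *m (1%:M - P)) + frob2 ((1%:M - Q) *m Ad)
                           + frob2 (Bd *m E *m Ad).
  rewrite D frob2B frob2B ipBl O1 O2 O3; ring.
have hAc : ctrmx A *m (1%:M - P) = 0.
  by rewrite -Pc -ctrmxM hAP ctrmx0.
have hBc : (1%:M - Q) *m ctrmx B = 0.
  by rewrite -Qc -ctrmxM hBQ ctrmx0.
have hBdc : Bd *m ctrmx Bd *m ctrmx B = Bd.
  by rewrite -mulmxA -ctrmxM hB3 mulmxA hB2.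
have hAdc : ctrmx A *m ctrmx Ad *m Ad = Ad.
  by rewrite -ctrmxM hA4 hA2.
have X2e : Bd *m (1%:M - P) = Bd *m (ctrmx Bd *m ctrmx ((1%:M - P) *m E)).
  by rewrite ctrmxM Pc hE ctrmxB mulmxBl hAc subr0 mulmxA [RHS]mulmxA hBdc.
have X3e : (1%:M - Q) *m Ad = - (ctrmx (E *m (1%:M - Q)) *m ctrmx Ad *m Ad).
  by rewrite ctrmxM Qc hE ctrmxB mulmxBr hBc sub0r !mulNmx opprK -!mulmxA (mulmxA (ctrmx A)) hAdc.
have bX2 : frob2 (Bd *m (1%:M - P)) <= nB ^+ 4 * frob2 ((1%:M - P) *m E).
  rewrite X2e; apply: le_trans (specL _ _) _.
  rewrite -/nB (_ : 4 = 2 + 2)%N // exprD -mulrA ler_wpM2l ?sqr_ge0 //.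
  by rewrite -(frob2_ctr ((1%:M - P) *m E)); apply: specLc.
have bX3 : frob2 ((1%:M - Q) *m Ad) <= nA ^+ 4 * frob2 (E *m (1%:M - Q)).
  rewrite X3e frob2N; apply: le_trans (specR _ _) _.
  rewrite -/nA mulrC (_ : 4 = 2 + 2)%N // exprD -mulrA ler_wpM2l ?sqr_ge0 //.
  by rewrite mulrC -(frob2_ctr (E *m (1%:M - Q))); apply: specRc.
have EQ : E *m (1%:M - Q) = P *m E *m (1%:M - Q).
  have : (1%:M - P) *m E *m (1%:M - Q) = 0.
    by rewrite hE (mulmxBr (1%:M - P)) hAP subr0 -mulmxA hBQ mulmx0.
  move=> h0.
  by rewrite -[E in LHS]mul1mx -(subrK P 1%:M) mulmxDl mulmxDl h0 add0r.
have FE : frob2 E = frob2 ((1%:M - P) *m E) + frob2 (P *m E *m (1%:M - Q))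
                    + frob2 (P *m E *m Q).
  have e1 : E = (1%:M - P) *m E + (P *m E *m (1%:M - Q) + P *m E *m Q).
    by rewrite mulmxBl mul1mx mulmxBr mulmx1; apply: zid2.
  have o1 : ip ((1%:M - P) *m E) (P *m E *m (1%:M - Q) + P *m E *m Q) = 0.
    by rewrite -mulmxDr subrK mulmx1 ip_mull Pc mulmxA PcP mul0mx ip0r.
  have o2 : ip (P *m E *m (1%:M - Q)) (P *m E *m Q) = 0.
    by rewrite ip_mulr Qc -(mulmxA (P *m E)) QQc mulmx0 ip0r.
  by rewrite {1}e1 frob2_3.
have mx : Num.max (frob2 (P *m E *m Bd) / nB ^+ 2)
     (frob2 (Ad *m E *m Bd *m B) / nA ^+ 2) <= frob2 (P *m E *m Q).
  rewrite ge_max; apply/andP; split; apply: div_sq_le; rewrite ?frob2_ge0 //.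
    have -> : P *m E *m Bd = (P *m E *m Q) *m Bd by rewrite -(mulmxA (P *m E)) QBd.
    exact: specR.
  have -> : Ad *m E *m Bd *m B = Ad *m (P *m E *m Q).
    by rewrite /P /Q !mulmxA hA2.
  by rewrite mulrC; apply: specL.
rewrite F FE; rewrite EQ in bX3.
apply: fin1 => //; rewrite ?frob2_ge0 //.
by rewrite exprn_ge0 // spec_ge0.
Qed.

Lemma part2 m n (A B : 'M[C]_(m, n)) (Ad Bd : 'M[C]_(n, m)) :
  is_MP A Ad -> is_MP B Bd -> \rank A = \rank B ->
  frob (Bd - Ad) ^+ 2 <= specnorm Ad ^+ 2 * specnorm Bd ^+ 2 *
      (frob (B - A) ^+ 2 - Num.max (frob (B *m Bd *m (B - A) *m Ad) ^+ 2 / specnorm Ad ^+ 2)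
                             (frob (Bd *m (B - A) *m Ad *m A) ^+ 2 / specnorm Bd ^+ 2))
   + frob (Bd *m (B - A) *m Ad) ^+ 2.
Proof.
move=> hA hB rk; move: (hA) (hB).
case=> hA1 hA2 hA3 hA4; case=> hB1 hB2 hB3 hB4.
rewrite !frob_sq.
set E := B - A; set nA := specnorm Ad; set nB := specnorm Bd.
set P := A *m Ad; set Q := Bd *m B.
have hE : E = B - A by [].
clearbody E.
have PP : P *m P = P by rewrite /P mulmxA hA1.
have QQ : Q *m Q = Q by rewrite /Q mulmxA hB2.
have PcP : (1%:M - P) *m P = 0 by rewrite mulmxBl mul1mx PP subrr.
have PPc : P *m (1%:M - P) = 0 by rewrite mulmxBr mulmx1 PP subrr.
have QcQ : (1%:M - Q) *m Q = 0 by rewrite mulmxBl mul1mx QQ subrr.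
have QQc : Q *m (1%:M - Q) = 0 by rewrite mulmxBr mulmx1 QQ subrr.
have hAP : (1%:M - P) *m A = 0 by rewrite mulmxBl mul1mx /P hA1 subrr.
have hBQ : B *m (1%:M - Q) = 0 by rewrite mulmxBr mulmx1 /Q mulmxA hB1 subrr.
have AdP : Ad *m P = Ad by rewrite /P mulmxA hA2.
have QBd : Q *m Bd = Bd by rewrite /Q hB2.
have Pc : ctrmx (1%:M - P) = 1%:M - P by rewrite ctrmxB ctrmx1 hA3.
have Qc : ctrmx (1%:M - Q) = 1%:M - Q by rewrite ctrmxB ctrmx1 hB4.
have D : Bd - Ad = Bd *m (1%:M - P) - (1%:M - Q) *m Ad - Bd *m E *m Ad.
  rewrite hE /P /Q mulmxBr mulmx1 mulmxBl mul1mx mulmxBr mulmxBl !mulmxA.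
  exact: zid1.
have O1 : ip (Bd *m (1%:M - P)) ((1%:M - Q) *m Ad) = 0.
  by rewrite -{1}QBd -mulmxA ip_mull hB4 -/Q mulmxA QQc mul0mx ip0r.
have O2 : ip (Bd *m (1%:M - P)) (Bd *m E *m Ad) = 0.
  by rewrite -AdP mulmxA ipC ip_mulr hA3 -/P -[Bd *m (1%:M - P) *m P]mulmxA PcP mulmx0 ip0r.
have O3 : ip ((1%:M - Q) *m Ad) (Bd *m E *m Ad) = 0.
  have -> : Bd *m E *m Ad = Q *m (Bd *m E *m Ad) by rewrite !mulmxA QBd.
  by rewrite ipC ip_mull hB4 -/Q mulmxA QQc mul0mx ip0r.
have F : frob2 (Bd - Ad) = frob2 (Bd *m (1%:M - P)) + frob2 ((1%:M - Q) *m Ad)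
                           + frob2 (Bd *m E *m Ad).
  rewrite D frob2B frob2B ipBl O1 O2 O3; ring.
set P' := B *m Bd; set Q' := Ad *m A.
have P'P' : P' *m P' = P' by rewrite /P' mulmxA hB1.
have Q'Q' : Q' *m Q' = Q' by rewrite /Q' mulmxA hA2.
have rP : \rank P = \rank A by case: (rank_mulMP hA1).
have rQ' : \rank Q' = \rank A by case: (rank_mulMP hA1).
have rQ : \rank Q = \rank B by case: (rank_mulMP hB1).
have rP' : \rank P' = \rank B by case: (rank_mulMP hB1).
have BdP' : Bd *m P' = Bd by rewrite /P' mulmxA hB2.
have Q'Ad : Q' *m Ad = Ad by rewrite /Q' hA2.
have P'cB : (1%:M - P') *m B = 0 by rewrite mulmxBl mul1mx /P' hB1 subrr.
have AQ'c : A *m (1%:M - Q') = 0 by rewrite mulmxBr mulmx1 /Q' mulmxA hA1 subrr.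
have P'c : ctrmx (1%:M - P') = 1%:M - P' by rewrite ctrmxB ctrmx1 hB3.
have Q'c : ctrmx (1%:M - Q') = 1%:M - Q' by rewrite ctrmxB ctrmx1 hA4.
have bX2 : frob2 (Bd *m (1%:M - P)) <= nB ^+ 2 * (nA ^+ 2 * frob2 ((1%:M - P') *m E *m Q')).
  have -> : Bd *m (1%:M - P) = Bd *m (P' *m (1%:M - P)) by rewrite mulmxA BdP'.
  apply: le_trans (specL _ _) _; rewrite -/nB ler_wpM2l ?sqr_ge0 //.
  rewrite proj_sine_eq ?hA3 ?hB3 ?rP ?rP' // -frob2_ctr ctrmxM P'c hA3 -/P.
  have -> : (1%:M - P') *m P = - ((1%:M - P') *m E *m Q' *m Ad).
    rewrite -(mulmxA ((1%:M - P') *m E)) Q'Ad hE (mulmxBr (1%:M - P')) P'cB sub0r.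
    by rewrite !mulNmx opprK -mulmxA.
  by rewrite frob2N mulrC; apply: specR.
have bX3 : frob2 ((1%:M - Q) *m Ad) <= nA ^+ 2 * (nB ^+ 2 * frob2 (P' *m E *m (1%:M - Q'))).
  have -> : (1%:M - Q) *m Ad = (1%:M - Q) *m Q' *m Ad.
    by rewrite -(mulmxA (1%:M - Q)) Q'Ad.
  apply: le_trans (specR _ _) _; rewrite -/nA mulrC ler_wpM2l ?sqr_ge0 //.
  rewrite -frob2_ctr ctrmxM Qc hA4 -/Q' proj_sine_eq ?hA4 ?hB4 ?rQ ?rQ' //.
  have -> : Q *m (1%:M - Q') = Bd *m (P' *m E *m (1%:M - Q')).
    rewrite !mulmxA hB2 hE (mulmxBr Bd) mulmxBl -(mulmxA Bd A) AQ'c mulmx0 subr0.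
    by [].
  exact: specL.
have h0 : (1%:M - P') *m E *m (1%:M - Q') = 0.
  by rewrite hE (mulmxBr (1%:M - P')) P'cB sub0r mulNmx -mulmxA AQ'c mulmx0 oppr0.
have h1 : (1%:M - P') *m E *m Q' = (1%:M - P') *m E.
  by move: h0; rewrite mulmxBr mulmx1 => /eqP; rewrite subr_eq0 eq_sym => /eqP.
have FE : frob2 E = frob2 ((1%:M - P') *m E *m Q') + frob2 (P' *m E *m (1%:M - Q'))
                    + frob2 (P' *m E *m Q').
  have e2 : P' *m E *m (1%:M - Q') + P' *m E *m Q' = P' *m E.
    by rewrite -mulmxDr subrK mulmx1.
  have e1 : E = (1%:M - P') *m E *m Q' + (P' *m E *m (1%:M - Q') + P' *m E *m Q').
    by rewrite e2 h1 -mulmxDl subrK mul1mx.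
  have o1 : ip ((1%:M - P') *m E *m Q') (P' *m E *m (1%:M - Q') + P' *m E *m Q') = 0.
    by rewrite e2 h1 ip_mull P'c mulmxA (mulmxBl 1%:M P') P'P' mul1mx subrr mul0mx ip0r.
  have o2 : ip (P' *m E *m (1%:M - Q')) (P' *m E *m Q') = 0.
    by rewrite ip_mulr Q'c -(mulmxA (P' *m E)) (mulmxBr Q') Q'Q' mulmx1 subrr mulmx0 ip0r.
  by rewrite {1}e1 frob2_3.
have mx : Num.max (frob2 (P' *m E *m Ad) / nA ^+ 2)
     (frob2 (Bd *m E *m Ad *m A) / nB ^+ 2) <= frob2 (P' *m E *m Q').
  rewrite ge_max; apply/andP; split; apply: div_sq_le; rewrite ?frob2_ge0 //.
    have -> : P' *m E *m Ad = (P' *m E *m Q') *m Ad by rewrite -(mulmxA (P' *m E)) Q'Ad.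
    exact: specR.
  have -> : Bd *m E *m Ad *m A = Bd *m (P' *m E *m Q').
    by rewrite /P' /Q' !mulmxA hB2.
  by rewrite mulrC; apply: specL.
rewrite F FE.
by apply: fin2 => //; rewrite sqr_ge0.
Qed.

End Main.

Theorem theorem3p5 (R : realType) (m n : nat) (A B : 'M[R[i]]_(m, n))
    (Ad Bd : 'M[R[i]]_(n, m)) (hA : is_MP A Ad) (hB : is_MP B Bd) :
  let E := B - A in
  let nA := specnorm Ad in
  let nB := specnorm Bd in
  let delta1 := Num.max (nA ^+ 4) (nB ^+ 4) *
      (frob E ^+ 2 - Num.max (frob (A *m Ad *m E *m Bd) ^+ 2 / nB ^+ 2)
                             (frob (Ad *m E *m Bd *m B) ^+ 2 / nA ^+ 2)) in
  let delta2 := Num.max (nA ^+ 4) (nB ^+ 4) *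
      (frob E ^+ 2 - Num.max (frob (B *m Bd *m E *m Ad) ^+ 2 / nA ^+ 2)
                             (frob (Bd *m E *m Ad *m A) ^+ 2 / nB ^+ 2)) in
  let eps1 := nA ^+ 2 * nB ^+ 2 *
      (frob E ^+ 2 - Num.max (frob (B *m Bd *m E *m Ad) ^+ 2 / nA ^+ 2)
                             (frob (Bd *m E *m Ad *m A) ^+ 2 / nB ^+ 2)) in
  let eps2 := nA ^+ 2 * nB ^+ 2 *
      (frob E ^+ 2 - Num.max (frob (A *m Ad *m E *m Bd) ^+ 2 / nB ^+ 2)
                             (frob (Ad *m E *m Bd *m B) ^+ 2 / nA ^+ 2)) in
  frob (Bd - Ad) ^+ 2 <= Num.min (delta1 + frob (Bd *m E *m Ad) ^+ 2)
                                 (delta2 + frob (Ad *m E *m Bd) ^+ 2)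
  /\ (\rank A = \rank B ->
      frob (Bd - Ad) ^+ 2 <= Num.min (eps1 + frob (Bd *m E *m Ad) ^+ 2)
                                     (eps2 + frob (Ad *m E *m Bd) ^+ 2)).
Proof.
move=> E nA nB d1 d2 e1 e2.
have p1 := part1 hA hB.
have p1' := part1 hB hA.
rewrite -[A - B]opprB !mulmxN !mulNmx !frobN -[Ad - Bd]opprB frobN in p1'.
rewrite [Num.max (_ ^+ 4) _]maxC in p1'.
split.
  by rewrite le_min; apply/andP; split.
move=> rk.
have p2 := part2 hA hB rk.
have p2' := part2 hB hA (esym rk).
rewrite -[A - B]opprB !mulmxN !mulNmx !frobN -[Ad - Bd]opprB frobN in p2'.
rewrite [specnorm Bd ^+ 2 * _]mulrC in p2'.
by rewrite le_min; apply/andP; split.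
Qed.
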